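(* For every integer $k\ge4$ and every prime power $q\ge k^2$, $$\left(1+\frac{q}{q-1}\sum_{i=1}^{k-2}\frac{(q-1)^i}{(q-2)^{\underline{i}}}\right)^{-1}<\min_{0\le j\le k-2}\frac{q^{\underline{j+1}}}{q^{j+1}}\log_q\!\left(\frac{q-j}{k-j-1}\right).$$ That is, the upper bound $\left(1+\frac{q}{q-1}\sum_{i=1}^{k-2}\frac{(q-1)^i}{(q-2)^{\underline{i}}}\right)^{-1}$ on the asymptotic rate of linear $k$-hash codes in $\mathbb{F}_q^n$ is strictly smaller than the Körner–Marton upper bound $\min_{0\le j\le k-2}\frac{q^{\underline{j+1}}}{q^{j+1}}\log_q\frac{q-j}{k-j-1}$ on the asymptotic rate of general $q$-ary $k$-hash codes.
   Context: For positive integers $b\le a$, $a^{\underline{b}}=a(a-1)\cdots(a-b+1)$. A $q$-ary code is a $k$-hash code if for any $k$ distinct codewords there is a coordinate in which they are all pairwise distinct. *)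

(* Defs.v *)
From HB Require Import structures.
From mathcomp Require Import all_boot all_order all_algebra.
From mathcomp Require Import reals exp.
Set Implicit Arguments. Unset Strict Implicit. Unset Printing Implicit Defensive.
Import Order.TTheory GRing.Theory Num.Theory.
Local Open Scope ring_scope.

Definition prime_power (q : nat) : Prop :=
  exists p m : nat, prime p /\ (0 < m)%N /\ q = (p ^ m)%N.

Definition logb {R : realType} (b x : R) : R := ln x / ln b.

Definition linear_bound {R : realType} (k q : nat) : R :=
  (1 + q%:R / (q - 1)%:R *
       \sum_(1 <= i < k.-1) ((q - 1)%:R ^+ i / ((q - 2) ^_ i)%:R))^-1.

Definition km_term {R : realType} (k q j : nat) : R :=
  (q ^_ j.+1)%:R / (q%:R ^+ j.+1) *
  logb (q%:R) ((q - j)%:R / (k - j - 1)%:R).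

(* Main.v *)
Require Import Defs.
From HB Require Import structures.
From mathcomp Require Import all_boot all_order all_algebra.
From mathcomp Require Import reals exp.
From mathcomp Require Import zify ring lra.
Import Order.TTheory GRing.Theory Num.Theory.
Local Open Scope ring_scope.

Lemma ffact_bound (R : realType) (q m : nat) : (m <= q)%N ->
  ((q ^ m)%:R : R) * (2 * q%:R - m%:R * (m%:R - 1)) <= 2 * q%:R * (q ^_ m)%:R.
Proof.
elim: m => [|m IH] Hm.
  by rewrite expn0 ffactn0 !mul1r mul0r subr0 mulr1.
have IH' := IH (ltnW Hm).
rewrite ffactnSr expnSr !natrM natrB ?(ltnW Hm) //.
have b0 : (0 : R) <= (q ^ m)%:R by [].
have hq : (m%:R : R) <= q%:R by rewrite ler_nat ltnW.
have m0 : (0 : R) <= m%:R by [].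
rewrite -natr1.
set a := (q ^_ m)%:R : R. set b := (q ^ m)%:R : R. set Q := q%:R : R. set M := m%:R : R.
have : 0 <= (Q - M) by lra.
move=> H1.
have H2 := ler_wpM2r H1 IH'.
have H3 : 0 <= b * (M * M * (M - 1)).
  apply: mulr_ge0 => //; rewrite /M; case: (m) => [|m'] /=; first by rewrite mul0r mul0r.
  apply: mulr_ge0; first exact: mulr_ge0.
  by rewrite subr_ge0 ler1n.
nra.
Qed.

Lemma ffact_le_exp (m n p : nat) : (n <= p)%N -> (n ^_ m <= p ^ m)%N.
Proof.
elim: m n => [|m IH] n Hn; first by rewrite ffactn0 expn0.
rewrite ffactnS expnS; apply: leq_mul => //; apply: IH.
by apply: leq_trans Hn; apply: leq_pred.
Qed.

Lemma nat_key (k q j : nat) : (4 <= k)%N -> (k ^ 2 <= q)%N -> (j <= k - 2)%N ->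
  (q * (k - j - 1) ^ 2 < (q - j) ^ 2)%N.
Proof.
move=> Hk Hq Hj.
have [s Es] : exists s, k = (j + 2 + s)%N by exists (k - j - 2)%N; lia.
subst k.
have [r Er] : exists r, q = (j + r)%N.
  exists (q - j)%N; have : (j <= (j + 2 + s) ^ 2)%N.
    by rewrite expnS; apply: leq_trans (leq_pmulr _ _); [lia | rewrite expn_gt0 addn2].
  move/leq_trans/(_ Hq); lia.
subst q.
have -> : (j + 2 + s - j - 1 = s.+1)%N by lia.
have -> : (j + r - j = r)%N by lia.
have Hr : (s.+1 <= r)%N.
  have : (j + 2 + s <= (j + 2 + s) ^ 2)%N by rewrite expnS leq_pmulr // expn_gt0 addn2.
  move/leq_trans/(_ Hq); lia.
have H1 : (r * (j + s + 1) >= (j + r) * s.+1)%N by nia.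
have H2 : ((j + s + 1) ^ 2 < j + r)%N by nia.
have H3 : ((j + r) * s.+1 ^ 2 * (j + s + 1) ^ 2 < r ^ 2 * (j + s + 1) ^ 2)%N.
  have H4 : ((j + r) ^ 2 * s.+1 ^ 2 <= r ^ 2 * (j + s + 1) ^ 2)%N.
    by rewrite -!expnMn leq_exp2r.
  apply: leq_trans H4.
  have -> : ((j + r) ^ 2 * s.+1 ^ 2 = ((j + r) * s.+1 ^ 2) * (j + r))%N by ring.
  by rewrite ltn_pmul2l // muln_gt0 expn_gt0 /=; lia.
by rewrite ltn_pmul2r // in H3; rewrite expn_gt0; lia.
Qed.

Theorem theorem4 (R : realType) (k q : nat) :
  (4 <= k)%N -> (k ^ 2 <= q)%N -> prime_power q ->
  forall j : nat, (j <= k - 2)%N ->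
    linear_bound (R := R) k q < km_term (R := R) k q j.
Proof.
move=> Hk Hq _ j Hj.
have q16 : (16 <= q)%N by apply: leq_trans Hq; rewrite (@leq_exp2r 4 k 2).
have kq : (k.+4 <= q)%N.
  apply: leq_trans Hq; rewrite expnS expn1.
  by apply: leq_trans (leq_mul (leqnn k) Hk); lia.
set N : R := (k - 1)%:R.
set Q : R := q%:R.
have N3 : 3 <= N by rewrite /N ler_nat; lia.
have Q16 : 16 <= Q by rewrite /Q ler_nat.
have QN : (N + 1) ^+ 2 <= Q.
  by rewrite /N /Q natr1 -natrX ler_nat; have -> : ((k - 1).+1 = k)%N by lia.
have HL : linear_bound (R := R) k q < N^-1.
  rewrite /linear_bound.
  set S := \sum_(1 <= i < k.-1) _.
  have HS : (k - 2)%:R <= S.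
    have -> : ((k - 2)%:R : R) = \sum_(1 <= i < k.-1) (1 : R).
      by rewrite sumr_const_nat; congr (_%:R); lia.
    rewrite /S big_nat [X in _ <= X]big_nat; apply: ler_sum => i /andP[Hi1 Hi2].
    have Hb : (0 : R) < ((q - 2) ^_ i)%:R by rewrite ltr0n ffact_gt0; lia.
    rewrite ler_pdivlMr // mul1r -natrX ler_nat; apply: ffact_le_exp; lia.
  have Hc : 1 < Q / (q - 1)%:R.
    have Hq1 : (0 : R) < (q - 1)%:R by rewrite ltr0n; lia.
    by rewrite ltr_pdivlMr // mul1r /Q ltr_nat; lia.
  have Hk2 : (k - 2)%:R = N - 1 :> R.
    by rewrite /N -(@natrB R (k - 1) 1) //; [congr (_%:R); lia | lia].
  rewrite Hk2 in HS.
  have HX : N < 1 + Q / (q - 1)%:R * S by nra.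
  rewrite ltf_pV2 // posrE; lra.
set m := j.+1.
have Hm : (m <= k - 1)%N by rewrite /m; lia.
have HmN : m%:R <= N by rewrite ler_nat.
have Hmq : (m <= q)%N by lia.
have Hfb := @ffact_bound R q m Hmq.
rewrite natrX -/Q in Hfb.
set a := ((q ^_ m)%:R : R) in Hfb *.
set b := Q ^+ m in Hfb *.
have b0 : 0 < b by rewrite /b exprn_gt0 //; lra.
have a0 : 0 <= a by [].
have HA : 2 * b <= N * a.
  have M0 : (0 : R) <= m%:R by [].
  have Hmm : m%:R * (m%:R - 1) <= N * (N - 1) :> R.
    have h1 : 0 <= (N - m%:R) * (m%:R + N - 1) by apply: mulr_ge0; lra.
    nra.
  have h2 : 0 <= (2 * N - 4) * (Q - (N + 1) ^+ 2) by apply: mulr_ge0; lra.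
  have h3 : 0 <= (N - 3) * (N * N + 4 * N + 6) by apply: mulr_ge0; nra.
  have H4 : 4 * Q <= N * (2 * Q - N * (N - 1)) by rewrite expr2 in h2; nra.
  have h5 : N * (b * (2 * Q - m%:R * (m%:R - 1))) <= N * (2 * Q * a).
    by apply: ler_wpM2l => //; lra.
  have h6 : 0 <= b * (N * (N * (N - 1)) - N * (m%:R * (m%:R - 1))).
    apply: mulr_ge0; first lra.
    have : 0 <= N * (N * (N - 1) - m%:R * (m%:R - 1)) by apply: mulr_ge0; lra.
    lra.
  have h7 : 0 <= b * (N * (2 * Q - N * (N - 1)) - 4 * Q) by apply: mulr_ge0; lra.
  have H5 : 4 * Q * b <= N * (2 * Q * a) by nra.
  nra.
set x : R := (q - j)%:R / (k - j - 1)%:R.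
have d0 : (0 : R) < (k - j - 1)%:R by rewrite ltr0n; lia.
have n0 : (0 : R) < (q - j)%:R by rewrite ltr0n; lia.
have x0 : 0 < x by rewrite /x divr_gt0.
have Hx2 : Q < x ^+ 2.
  rewrite /x expr_div_n ltr_pdivlMr ?exprn_gt0 // -!natrX /Q -natrM ltr_nat.
  exact: nat_key.
have lnQ : 0 < ln Q by apply: ln_gt0; lra.
have HB : 1 / 2 < logb Q x.
  rewrite /logb ltr_pdivlMr //.
  have : ln Q < ln (x ^+ 2) by rewrite ltr_ln // posrE ?exprn_gt0 //; lra.
  by rewrite lnXn // mulr2n; lra.
rewrite /km_term -/m -/Q -/a -/b -/x.
apply: (lt_trans HL).
set B := logb Q x in HB *.
have NA : 2 <= N * (a / b).
  by rewrite mulrA ler_pdivlMr.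
have Ab0 : 0 <= a / b by apply: divr_ge0 => //; lra.
have H6 : 1 < N * (a / b * B) by nra.
have NV : N^-1 * N = 1 by apply: mulVf; lra.
have Ni0 : 0 < N^-1 by rewrite invr_gt0; lra.
have -> : a / b * B = N^-1 * (N * (a / b * B)) by rewrite [RHS]mulrA NV mul1r.
rewrite -[X in X < _]mulr1; rewrite ltr_pM2l //.
Qed.
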